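(* Let $D$ be a $3$-dicritical semi-complete digraph. Then every arc $a$ of $D$ either belongs to a digon or is contained in an induced directed triangle of $D$.
   Context: Digraphs have no loops or parallel arcs; a digon is a pair of arcs $uv,vu$. A $2$-dicolouring is a map to $\{1,2\}$ whose colour classes induce acyclic subdigraphs. $D$ is $3$-dicritical if $D$ has no $2$-dicolouring but every proper subdigraph has one. $D$ is semi-complete if every two distinct vertices are joined by at least one arc. An induced directed triangle is a set of three vertices $x,y,z$ such that the subdigraph induced by them has exactly the arcs $xy,yz,zx$. *)

(* Defs.v *)
From mathcomp Require Import all_boot.
Set Implicit Arguments. Unset Strict Implicit. Unset Printing Implicit Defensive.

(* A digraph on a finite vertex type V: an arc relation [a] that is
   irreflexive (no loops); parallel arcs are impossible by construction. *)

Definition loopless (V : finType) (a : rel V) : Prop := forall x, ~~ a x x.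

Definition dicycle_in (V : finType) (A : rel V) (X : {set V}) (s : seq V) : bool :=
  [&& s != [::], uniq s, all (mem X) s & cycle A s].

Definition acyclic_in (V : finType) (A : rel V) (X : {set V}) : Prop :=
  forall s : seq V, ~~ dicycle_in A X s.

Definition two_dicolouring (V : finType) (S : {set V}) (A : rel V)
  (c : V -> bool) : Prop :=
  forall b : bool, acyclic_in A [set x in S | c x == b].

Definition two_dicolourable (V : finType) (S : {set V}) (A : rel V) : Prop :=
  exists c : V -> bool, two_dicolouring S A c.

Definition subdigraph (V : finType) (a : rel V) (S : {set V}) (A : rel V) : Prop :=
  forall x y, A x y -> [/\ x \in S, y \in S & a x y].

Definition proper_subdigraph (V : finType) (a : rel V) (S : {set V}) (A : rel V)
  : Prop :=
  subdigraph a S A /\ (S != setT \/ exists x y, a x y /\ ~~ A x y).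

Definition dicritical3 (V : finType) (a : rel V) : Prop :=
  ~ two_dicolourable setT a /\
  forall S A, proper_subdigraph a S A -> two_dicolourable S A.

Definition semi_complete (V : finType) (a : rel V) : Prop :=
  forall x y, x != y -> a x y || a y x.

Definition induced_directed_triangle (V : finType) (a : rel V) (x y z : V) : Prop :=
  [/\ uniq [:: x; y; z], a x y, a y z, a z x & [/\ ~~ a y x, ~~ a z y & ~~ a x z]].

(* Main.v *)
Require Import Defs.
From mathcomp Require Import all_boot.
From Stdlib Require Import Classical.

Lemma shorten (V : finType) (a : rel V) (X : {set V}) :
  semi_complete a -> forall n s, size s <= n -> dicycle_in a X s ->
  exists s', dicycle_in a X s' /\ size s' <= 3.
Proof.
move=> sc; elim=> [|n IH] s.
  by case: s.
case: s => [|x0 [|x1 [|x2 [|x3 t]]]] hs d; try by exists [::]; rewrite //.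
- by exists [:: x0].
- by exists [:: x0; x1].
- by exists [:: x0; x1; x2].
move: d => /and4P [_ U Al Cy].
move: U; rewrite /= !inE !negb_or.
case/and5P => /and4P [n01 n02 n03 n0t] /and3P [n12 n13 n1t] /andP [n23 n2t] n3t ut.
move: Al; rewrite /= => /and5P [x0X x1X x2X x3X tX].
case/orP: (sc _ _ n02) => h.
  apply: (IH (x0 :: x2 :: x3 :: t)); first by move: hs; rewrite /= !ltnS.
  apply/and4P; split => //.
  - by rewrite /= !inE !negb_or n02 n03 n0t n23 n2t n3t ut.
  - by rewrite /= x0X x2X x3X tX.
  - by move: Cy; rewrite /cycle /= h => /and3P [_ _ ->].
exists [:: x0; x1; x2]; split => //.
apply/and4P; split => //.
- by rewrite /= !inE !negb_or n01 n02 n12.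
- by rewrite /= x0X x1X x2X.
- by move: Cy; rewrite /cycle /= h => /and3P [-> -> _].
Qed.

Theorem lemma14 (V : finType) (a : rel V) :
  loopless a -> semi_complete a -> dicritical3 a ->
  forall u v : V, a u v ->
    a v u \/ exists w : V, induced_directed_triangle a u v w.
Proof.
move=> ll sc [nd crit] u v huv.
case hvu: (a v u); first by left.
right.
pose A := [rel x y | a x y && ((x, y) != (u, v))].
have [c hc] : two_dicolourable setT A.
  apply: crit; split.
    by move=> x y /andP [h _]; rewrite !inE.
  by right; exists u, v; rewrite /= huv eqxx.
have [b nb] : exists b, ~ acyclic_in a [set x in setT | c x == b].
  apply: not_all_ex_not => H; apply: nd; exists c => b; exact: H.
have [s ds] : exists s, dicycle_in a [set x in setT | c x == b] s.
  apply: NNPP => H; apply: nb => s; apply/negP => d; apply: H; by exists s.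
have noA : forall t, dicycle_in A [set x in setT | c x == b] t -> False.
  by move=> t ht; move: (hc b t); rewrite ht.
set X := [set x in setT | c x == b] in ds noA.
clearbody X.
have [s' [ds' hs']] := @shorten _ _ _ sc _ _ (leqnn _) ds.
have two : forall p q, p \in X -> q \in X -> p != q -> a p q -> a q p ->
    (p, q) != (u, v) -> (q, p) != (u, v) -> False.
  move=> p q pX qX npq h1 h2 n1 n2; apply: (noA [:: p; q]).
  by rewrite /dicycle_in /= inE npq pX qX /= h1 h2 n1 n2.
move: ds' hs'; case: s' => [|x [|y [|z [|w t]]]] // /and4P [_ U Al Cy] _.
- by move: Cy; rewrite /cycle /= (negbTE (ll x)).
- exfalso; move: U Al Cy; rewrite /cycle /= !inE andbT => nxy /and3P [xX yX _] /and3P [h1 h2 _].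
  apply: (two x y) => //; apply/negP => /eqP [ex ey]; subst.
    by rewrite hvu in h2.
  by rewrite hvu in h1.
have tri : forall w, w \in X -> u \in X -> v \in X -> uniq [:: u; v; w] ->
    a v w -> a w u -> induced_directed_triangle a u v w.
  move=> w wX uX vX uq hvw hwu.
  move: (uq); rewrite /= !inE !negb_or andbT => /andP [/andP [nuv nuw] nvw].
  rewrite /induced_directed_triangle; split => //; split; first by rewrite hvu.
    apply/negP => hwv; apply: (two v w vX wX nvw hvw hwv).
      by apply/negP => /eqP E; case: E => *; subst; rewrite ?eqxx in nuv nuw nvw.
    by apply/negP => /eqP E; case: E => *; subst; rewrite ?eqxx in nuv nuw nvw.
  apply/negP => huw; apply: (two u w uX wX nuw huw hwu).
    by apply/negP => /eqP E; case: E => *; subst; rewrite ?eqxx in nuv nuw nvw.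
  by apply/negP => /eqP E; case: E => *; subst; rewrite ?eqxx in nuv nuw nvw.
move: Al Cy; rewrite /cycle /= andbT => /and3P [xX yX zX] /and4P [h1 h2 h3 _].
case e1: ((x, y) == (u, v)).
  move/eqP: e1 => [ex ey]; subst; exists z; exact: tri.
case e2: ((y, z) == (u, v)).
  move/eqP: e2 => [ex ey]; subst; exists x; apply: tri => //.
  by rewrite -(rot_uniq 1 [:: x; u; v]) in U.
case e3: ((z, x) == (u, v)).
  move/eqP: e3 => [ex ey]; subst; exists y; apply: tri => //.
  by rewrite -(rot_uniq 2 [:: v; y; u]) in U.
exfalso; apply: (noA [:: x; y; z]).
by rewrite /dicycle_in U /= xX yX zX /cycle /= h1 h2 h3 e1 e2 e3.
Qed.
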